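(* A sentence $\phi$ in the language of Heyting Arithmetic $\mathbf{HA}$ is true in the standard interpretation in the doctrine of variations $\Psi_{\mathbf{PAsm}}$ (i.e. its interpretation is the top element of $\Psi_{\mathbf{PAsm}}(1)$) if and only if $\phi$ has a realizer in the sense of Kleene's number realizability.
   Context: $\mathbf{PAsm}$ is the category of partitioned assemblies: objects $(P,T)$ with $P$ a set and $T:P\to\mathbb N$ a function; arrows functions $f$ such that for some $t$, $\varphi_t(T(x))$ is defined and equals $T'(f(x))$ for all $x$ ($\varphi_t$ the $t$-th partial recursive function). $\Psi_{\mathbf{PAsm}}$ sends $A$ to the poset reflection of $\mathbf{PAsm}/A$, reindexing by weak pullback; it is an arithmetic weak hyperdoctrine (Heyting fibres, quantifiers along projections, equality predicates, and a parameterized natural number object $\mathbf N=(\mathbb N,\mathrm{id})$ satisfying induction). The standard interpretation of $\mathbf{HA}$ in $\Psi_{\mathbf{PAsm}}$ takes $\mathbf N$ as domain, interprets the arithmetic operations by the corresponding arrows on $\mathbf N$, and interprets connectives, quantifiers and equality by the corresponding operations of the doctrine. Kleene realizability $m\Vdash\phi$ is the standard number realizability relation for $\mathbf{HA}$-sentences. *)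

(* Defs.v *)
From Stdlib Require Import Arith.

Set Implicit Arguments.

Fixpoint tri (k : nat) : nat := match k with 0 => 0 | S k' => S k' + tri k' end.
Definition cpair (x y : nat) : nat := tri (x + y) + y.

Inductive prf : Type :=
| PZero | PSucc | PId | PFst | PSnd
| PPair (f g : prf)
| PComp (f g : prf)
| PRec (f g : prf)
| PMin (f : prf).

Inductive eval : prf -> nat -> nat -> Prop :=
| ev_zero n : eval PZero n 0
| ev_succ n : eval PSucc n (S n)
| ev_id n : eval PId n n
| ev_fst a b : eval PFst (cpair a b) a
| ev_snd a b : eval PSnd (cpair a b) b
| ev_pair f g n a b : eval f n a -> eval g n b -> eval (PPair f g) n (cpair a b)
| ev_comp f g n b c : eval g n b -> eval f b c -> eval (PComp f g) n c
| ev_rec0 f g x a : eval f x a -> eval (PRec f g) (cpair x 0) a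
| ev_recS f g x y b c :
    eval (PRec f g) (cpair x y) b -> eval g (cpair x (cpair y b)) c ->
    eval (PRec f g) (cpair x (S y)) c
| ev_min f x y :
    eval f (cpair x y) 0 ->
    (forall z, z < y -> exists v, eval f (cpair x z) (S v)) ->
    eval (PMin f) x y.

Fixpoint code (c : prf) : nat :=
  match c with
  | PZero => cpair 0 0
  | PSucc => cpair 1 0
  | PId => cpair 2 0
  | PFst => cpair 3 0
  | PSnd => cpair 4 0
  | PPair f g => cpair 5 (cpair (code f) (code g))
  | PComp f g => cpair 6 (cpair (code f) (code g))
  | PRec f g => cpair 7 (cpair (code f) (code g))
  | PMin f => cpair 8 (code f)
  end.

(* phi t x y  :<->  phi_t(x) is defined and equals y
   (numbers that are not codes index the empty function) *)
Definition phi (t x y : nat) : Prop := exists c, code c = t /\ eval c x y.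

Record asm : Type := Asm { car : Type; tr : car -> nat }.

Definition tracked (A B : asm) (f : car A -> car B) : Prop :=
  exists t, forall x, phi t (tr A x) (tr B (f x)).

Definition one_asm : asm := @Asm unit (fun _ => 0).
Definition N_asm : asm := @Asm nat (fun n => n).
Definition prod_asm (A B : asm) : asm :=
  @Asm (car A * car B) (fun p => cpair (tr A (fst p)) (tr B (snd p))).

(* contexts of n variables: N^n = (...((1 x N) x N) ... x N) ;
   de Bruijn index 0 is the last component *)
Fixpoint ctxobj (n : nat) : asm :=
  match n with 0 => one_asm | S n' => prod_asm (ctxobj n') N_asm end.

(* Psi_PAsm(A) : poset reflection of the slice PAsm/A                   *)
Record over (A : asm) : Type := Over {
  dom : asm;
  omap : car dom -> car A;
  omap_tr : tracked dom A omap }.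

Definition leq (A : asm) (X Y : over A) : Prop :=
  exists h : car (dom X) -> car (dom Y),
    tracked (dom X) (dom Y) h /\ forall x, omap Y (h x) = omap X x.

Definition equiv (A : asm) (X Y : over A) : Prop := leq X Y /\ leq Y X.

Lemma id_tracked (A : asm) : tracked A A (fun x => x).
Proof. exists (code PId); intro x; exists PId; split; [reflexivity| constructor]. Qed.

Definition top_over (A : asm) : over A := @Over A A (fun x => x) (id_tracked A).

Definition pb_asm (B C : asm) (A : Type) (g : car B -> A) (f : car C -> A) : asm :=
  @Asm {p : car B * car C | g (fst p) = f (snd p)}
       (fun p => cpair (tr B (fst (proj1_sig p))) (tr C (snd (proj1_sig p)))).

Lemma pb_fst_tracked (B C : asm) (A : Type) (g : car B -> A) (f : car C -> A) :
  tracked (pb_asm B C g f) B (fun p => fst (proj1_sig p)).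
Proof. exists (code PFst); intro x; exists PFst; split; [reflexivity| constructor]. Qed.

(* reindexing along g : B -> A, by (weak) pullback *)
Definition reindex (A B : asm) (g : car B -> car A) (X : over A) : over B :=
  @Over B (pb_asm B (dom X) g (omap X)) (fun p => fst (proj1_sig p))
        (pb_fst_tracked B (dom X) g (omap X)).

Definition delta_N : over (prod_asm N_asm N_asm).
Proof.
  refine (@Over (prod_asm N_asm N_asm) N_asm (fun k => (k, k)) _).
  exists (code (PPair PId PId)); intro x; exists (PPair PId PId); split;
    [reflexivity| simpl; constructor; constructor].
Defined.

Inductive term (n : nat) : Type :=
| TVar (i : nat) (_ : i < n)
| TZero
| TSucc (t : term n)
| TPlus (s t : term n)
| TMult (s t : term n).

Inductive form : nat -> Type :=
| FEq n (s t : term n) : form n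
| FBot n : form n
| FAnd n (p q : form n) : form n
| FOr n (p q : form n) : form n
| FImp n (p q : form n) : form n
| FAll n (p : form (S n)) : form n
| FEx n (p : form (S n)) : form n.

Fixpoint lookup (n : nat) : car (ctxobj n) -> nat -> nat :=
  match n return car (ctxobj n) -> nat -> nat with
  | 0 => fun _ _ => 0
  | S n' => fun g i => match i with
                       | 0 => snd g
                       | S i' => lookup n' (fst g) i'
                       end
  end.

Fixpoint teval (n : nat) (t : term n) (g : car (ctxobj n)) : nat :=
  match t with
  | @TVar _ i _ => lookup n g i
  | TZero _ => 0
  | TSucc t => S (teval t g)
  | TPlus s t => teval s g + teval t g
  | TMult s t => teval s g * teval t g
  end.

Definition ctx_proj (n : nat) : car (ctxobj (S n)) -> car (ctxobj n) :=
  fun g => fst g.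

(* The standard interpretation of HA in Psi_PAsm: the interpretation of *)
(* each formula in context n is an element of Psi(N^n), determined (up  *)
(* to the equivalence of the poset reflection) by the doctrine          *)
(* operations, given by their universal properties.                     *)
Record std_interp (I : forall n, form n -> over (ctxobj n)) : Prop := {
  si_eq : forall n (s t : term n),
      equiv (I n (FEq s t))
            (@reindex (prod_asm N_asm N_asm) (ctxobj n) (fun g => (teval s g, teval t g)) delta_N);
  si_bot : forall n (Z : over (ctxobj n)), leq (I n (FBot n)) Z;
  si_and : forall n (p q : form n) (Z : over (ctxobj n)),
      leq Z (I n (FAnd p q)) <-> (leq Z (I n p) /\ leq Z (I n q));
  si_or : forall n (p q : form n) (Z : over (ctxobj n)),
      leq (I n (FOr p q)) Z <-> (leq (I n p) Z /\ leq (I n q) Z);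
  (* Heyting implication: Z <= (p => q)  iff  Z /\ p <= q,
     the meet being expressed by its universal property *)
  si_imp : forall n (p q : form n) (Z : over (ctxobj n)),
      leq Z (I n (FImp p q)) <->
      (forall W : over (ctxobj n), leq W Z -> leq W (I n p) -> leq W (I n q));
  si_all : forall n (p : form (S n)) (Z : over (ctxobj n)),
      leq Z (I n (FAll p)) <-> leq (@reindex _ (ctxobj (S n)) (@ctx_proj n) Z) (I (S n) p);
  si_ex : forall n (p : form (S n)) (Z : over (ctxobj n)),
      leq (I n (FEx p)) Z <-> leq (I (S n) p) (@reindex _ (ctxobj (S n)) (@ctx_proj n) Z) }.

Fixpoint realizes (n : nat) (f : form n) : car (ctxobj n) -> nat -> Prop :=
  match f in form n return car (ctxobj n) -> nat -> Prop with
  | FEq s t => fun g _ => teval s g = teval t g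
  | FBot _ => fun _ _ => False
  | FAnd p q => fun g m =>
      exists a b, m = cpair a b /\ realizes p g a /\ realizes q g b
  | FOr p q => fun g m =>
      (exists a, m = cpair 0 a /\ realizes p g a) \/
      (exists k a, m = cpair (S k) a /\ realizes q g a)
  | FImp p q => fun g m =>
      forall a, realizes p g a -> exists b, phi m a b /\ realizes q g b
  | @FAll n' p => fun g m =>
      forall k, exists b, phi m k b /\ realizes p ((g, k) : car (ctxobj (S n'))) b
  | @FEx n' p => fun g m =>
      exists k a, m = cpair k a /\ realizes p ((g, k) : car (ctxobj (S n'))) a
  end.

(* Main.v *)
Require Import Defs.
From Stdlib Require Import Arith Lia List IndefiniteDescription.
Import ListNotations.

Fixpoint unpair (n : nat) : nat * nat :=
  match n with
  | 0 => (0, 0)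
  | S n' => let (x, y) := unpair n' in
            match x with 0 => (S y, 0) | S x' => (x', S y) end
  end.
Definition fstn n := fst (unpair n).
Definition sndn n := snd (unpair n).

Lemma cpair_S_r a b : cpair a (S b) = S (cpair (S a) b).
Proof. unfold cpair. replace (a + S b) with (S a + b) by lia. lia. Qed.
Lemma cpair_S0 a : cpair (S a) 0 = S (cpair 0 a).
Proof. unfold cpair. rewrite !Nat.add_0_r. simpl. lia. Qed.
Lemma cpair00 : cpair 0 0 = 0.
Proof. reflexivity. Qed.

Lemma cpair_unpair n : cpair (fstn n) (sndn n) = n.
Proof.
  unfold fstn, sndn. induction n as [|n IH]; [reflexivity|].
  simpl. destruct (unpair n) as [x y]. simpl in *.
  destruct x as [|x].
  - simpl. rewrite cpair_S0. congruence.
  - simpl. rewrite cpair_S_r. congruence.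
Qed.

Lemma unpair_cpair a b : unpair (cpair a b) = (a, b).
Proof.
  remember (a + b) as s eqn:Hs. revert a b Hs.
  induction s as [|s IHs]; intros a b.
  - intros Hs. assert (a = 0) by lia; assert (b = 0) by lia; subst. reflexivity.
  - revert a. induction b as [|b IHb]; intros a Hs.
    + destruct a as [|a]; [lia|]. rewrite cpair_S0. simpl.
      rewrite (IHs 0 a) by lia. reflexivity.
    + rewrite cpair_S_r. cbn [unpair]. rewrite (IHb (S a)) by lia. reflexivity.
Qed.

Lemma fstn_cpair a b : fstn (cpair a b) = a.
Proof. unfold fstn. rewrite unpair_cpair. reflexivity. Qed.
Lemma sndn_cpair a b : snd (unpair (cpair a b)) = b.
Proof. rewrite unpair_cpair. reflexivity. Qed.
Lemma sndn_cpair' a b : sndn (cpair a b) = b.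
Proof. unfold sndn. rewrite unpair_cpair. reflexivity. Qed.

Lemma cpair_inj a b c d : cpair a b = cpair c d -> a = c /\ b = d.
Proof.
  intro H. pose proof (f_equal unpair H) as H'. rewrite !unpair_cpair in H'.
  inversion H'; auto.
Qed.

Arguments cpair : simpl never.
Arguments fstn : simpl never.
Arguments sndn : simpl never.

Inductive ex : Type :=
| EVar | EZ | ES (a : ex) | EPr (a b : ex) | EFs (a : ex) | ESn (a : ex)
| ECmp (f a : ex) | EIter (f k x : ex) | EIfz (c a b : ex) | EPred (a : ex).

Fixpoint denote (e : ex) (n : nat) : nat :=
  match e with
  | EVar => n
  | EZ => 0
  | ES a => S (denote a n)
  | EPr a b => cpair (denote a n) (denote b n)
  | EFs a => fstn (denote a n)
  | ESn a => sndn (denote a n)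
  | ECmp f a => denote f (denote a n)
  | EIter f k x => Nat.iter (denote k n) (denote f) (denote x n)
  | EIfz c a b => match denote c n with 0 => denote a n | S _ => denote b n end
  | EPred a => pred (denote a n)
  end.

Fixpoint compile (e : ex) : prf :=
  match e with
  | EVar => PId
  | EZ => PZero
  | ES a => PComp PSucc (compile a)
  | EPr a b => PPair (compile a) (compile b)
  | EFs a => PComp PFst (compile a)
  | ESn a => PComp PSnd (compile a)
  | ECmp f a => PComp (compile f) (compile a)
  | EIter f k x => PComp (PRec PId (PComp (compile f) (PComp PSnd PSnd)))
                         (PPair (compile x) (compile k))
  | EIfz c a b => PComp (PRec PFst (PComp PSnd PFst))
                        (PPair (PPair (compile a) (compile b)) (compile c))
  | EPred a => PComp (PRec PZero (PComp PFst PSnd)) (PPair PZero (compile a))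
  end.

Lemma eval_fst n : eval PFst n (fstn n).
Proof. pose proof (ev_fst (fstn n) (sndn n)) as H. rewrite cpair_unpair in H. exact H. Qed.
Lemma eval_snd n : eval PSnd n (sndn n).
Proof. pose proof (ev_snd (fstn n) (sndn n)) as H. rewrite cpair_unpair in H. exact H. Qed.

Lemma compile_ok e : forall n, eval (compile e) n (denote e n).
Proof.
  induction e; intro n; simpl.
  - constructor.
  - constructor.
  - econstructor; [apply IHe| constructor].
  - constructor; auto.
  - econstructor; [apply IHe| apply eval_fst].
  - econstructor; [apply IHe| apply eval_snd].
  - econstructor; [apply IHe2| apply IHe1].
  - econstructor; [constructor; [apply IHe3| apply IHe2]|].
    generalize (denote e2 n) as k. intro k. induction k as [|k IHk].
    + constructor. constructor.
    + simpl. econstructor; [exact IHk|].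
      econstructor; [econstructor; constructor|]. apply IHe1.
  - econstructor; [constructor; [constructor; [apply IHe2|apply IHe3]|apply IHe1]|].
    destruct (denote e1 n) as [|k].
    + constructor. constructor.
    + induction k as [|k IHk].
      * econstructor; [constructor; constructor|]. econstructor; constructor.
      * econstructor; [exact IHk|]. econstructor; constructor.
  - econstructor; [constructor; [constructor|apply IHe]|].
    destruct (denote e n) as [|k].
    + constructor. constructor.
    + simpl. destruct k as [|k].
      * econstructor; [constructor; constructor|]. econstructor; constructor.
      * econstructor.
        { clear. induction k as [|k IHk].
          - econstructor; [constructor; constructor|]. econstructor; constructor.
          - econstructor; [exact IHk|]. econstructor; constructor. }
        econstructor; constructor.
Qed.

Fixpoint EConst (k : nat) : ex := match k with 0 => EZ | S k => ES (EConst k) end.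
Lemma denote_EConst k n : denote (EConst k) n = k.
Proof. induction k; simpl; auto. Qed.

Definition EAdd a b := EIter (ES EVar) b a.
Lemma iter_S k x : Nat.iter k S x = k + x.
Proof. induction k; simpl; auto. Qed.
Lemma denote_EAdd a b n : denote (EAdd a b) n = denote a n + denote b n.
Proof. unfold EAdd. simpl. rewrite iter_S. lia. Qed.

Definition stepT := EPr (EAdd (EFs EVar) (ES (ESn EVar))) (ES (ESn EVar)).
Lemma iter_stepT s : Nat.iter s (denote stepT) (cpair 0 0) = cpair (tri s) s.
Proof.
  induction s as [|s IH]; [reflexivity|].
  rewrite Nat.iter_succ, IH. unfold stepT. cbn [denote]. rewrite denote_EAdd.
  cbn [denote]. rewrite fstn_cpair, sndn_cpair'. f_equal. simpl. lia.
Qed.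
Definition ECp a b := EAdd (EFs (EIter stepT (EAdd a b) (EPr EZ EZ))) b.
Lemma denote_ECp a b n : denote (ECp a b) n = cpair (denote a n) (denote b n).
Proof.
  unfold ECp. rewrite denote_EAdd. cbn [denote]. rewrite denote_EAdd.
  rewrite cpair00, iter_stepT, fstn_cpair. unfold cpair. reflexivity.
Qed.

Fixpoint caseN (t : ex) (cs : list ex) (d : ex) : ex :=
  match cs with
  | [] => d
  | c :: cs => EIfz t c (caseN (EPred t) cs d)
  end.
Lemma denote_caseN cs : forall t d n,
  denote (caseN t cs d) n = nth (denote t n) (map (fun e => denote e n) cs) (denote d n).
Proof.
  induction cs as [|c cs IH]; intros t d n; simpl.
  - destruct (denote t n); reflexivity.
  - destruct (denote t n) eqn:E; [reflexivity|]. rewrite IH. simpl. rewrite E. reflexivity.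
Qed.
Arguments caseN : simpl never.

Definition Evalc c x K := cpair 0 (cpair c (cpair x K)).
Definition Retc v K := cpair 1 (cpair v K).
Definition pushc t d K := S (cpair t (cpair d K)).

Definition mkEval c x K := EPr EZ (EPr c (EPr x K)).
Definition mkRet v K := EPr (EConst 1) (EPr v K).
Definition push t d K := ES (EPr (EConst t) (EPr d K)).

Notation bd := (ESn EVar) (only parsing).
Notation ec := (EFs bd) (only parsing).
Notation ex_ := (EFs (ESn bd)).
Notation eK := (ESn (ESn bd)) (only parsing).
Notation er := (ESn ec) (only parsing).
Definition EvalCase :=
  caseN (EFs ec)
   [ mkRet EZ eK; mkRet (ES ex_) eK; mkRet ex_ eK; mkRet (EFs ex_) eK; mkRet (ESn ex_) eK;
     mkEval (EFs er) ex_ (push 0 (EPr (ESn er) ex_) eK);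
     mkEval (ESn er) ex_ (push 2 (EFs er) eK);
     EIfz (ESn ex_) (mkEval (EFs er) (EFs ex_) eK)
          (mkEval ec (EPr (EFs ex_) (EPred (ESn ex_)))
             (push 3 (EPr (ESn er) (EPr (EFs ex_) (EPred (ESn ex_)))) eK));
     mkEval er (EPr ex_ EZ) (push 4 (EPr er (EPr ex_ EZ)) eK) ] EVar.
Notation rv := (EFs bd) (only parsing).
Notation rK := (ESn bd) (only parsing).
Notation fr := (EPred rK) (only parsing).
Notation dd := (EFs (ESn fr)) (only parsing).
Notation K' := (ESn (ESn fr)) (only parsing).
Definition RetCase :=
  EIfz rK EVar
   (caseN (EFs fr)
     [ mkEval (EFs dd) (ESn dd) (push 1 rv K');
       mkRet (EPr dd rv) K';
       mkEval dd rv K';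
       mkEval (EFs dd) (EPr (EFs (ESn dd)) (EPr (ESn (ESn dd)) rv)) K';
       EIfz rv (mkRet (ESn (ESn dd)) K')
         (mkEval (EFs dd) (EPr (EFs (ESn dd)) (ES (ESn (ESn dd))))
            (push 4 (EPr (EFs dd) (EPr (EFs (ESn dd)) (ES (ESn (ESn dd))))) K')) ] EVar).
Definition stepE := EIfz (EFs EVar) EvalCase RetCase.
Definition step := denote stepE.

Ltac stp := unfold step, stepE, EvalCase, RetCase, Evalc, Retc, pushc;
  repeat (cbn [denote]; rewrite ?denote_caseN, ?denote_EConst, ?fstn_cpair, ?sndn_cpair';
          cbn [map nth pred]); unfold mkEval, mkRet, push;
  repeat (cbn [denote]; rewrite ?denote_caseN, ?denote_EConst, ?fstn_cpair, ?sndn_cpair';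
          cbn [map nth pred]).

Lemma step_pair f g x K :
  step (Evalc (code (PPair f g)) x K) = Evalc (code f) x (pushc 0 (cpair (code g) x) K).
Proof. cbn [code]. stp. reflexivity. Qed.
Lemma step_zero x K : step (Evalc (code PZero) x K) = Retc 0 K.
Proof. cbn [code]. stp. reflexivity. Qed.
Lemma step_succ x K : step (Evalc (code PSucc) x K) = Retc (S x) K.
Proof. cbn [code]. stp. reflexivity. Qed.
Lemma step_id x K : step (Evalc (code PId) x K) = Retc x K.
Proof. cbn [code]. stp. reflexivity. Qed.
Lemma step_fst x K : step (Evalc (code PFst) x K) = Retc (fstn x) K.
Proof. cbn [code]. stp. reflexivity. Qed.
Lemma step_snd x K : step (Evalc (code PSnd) x K) = Retc (sndn x) K.
Proof. cbn [code]. stp. reflexivity. Qed.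
Lemma step_comp f g x K :
  step (Evalc (code (PComp f g)) x K) = Evalc (code g) x (pushc 2 (code f) K).
Proof. cbn [code]. stp. reflexivity. Qed.
Lemma step_rec0 f g x K :
  step (Evalc (code (PRec f g)) (cpair x 0) K) = Evalc (code f) x K.
Proof. cbn [code]. stp. reflexivity. Qed.
Lemma step_recS f g x y K :
  step (Evalc (code (PRec f g)) (cpair x (S y)) K) =
  Evalc (code (PRec f g)) (cpair x y) (pushc 3 (cpair (code g) (cpair x y)) K).
Proof. cbn [code]. stp. reflexivity. Qed.
Lemma step_min f x K :
  step (Evalc (code (PMin f)) x K) =
  Evalc (code f) (cpair x 0) (pushc 4 (cpair (code f) (cpair x 0)) K).
Proof. cbn [code]. stp. reflexivity. Qed.
Lemma step_k0 v g x K : step (Retc v (pushc 0 (cpair g x) K)) = Evalc g x (pushc 1 v K).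
Proof. stp. reflexivity. Qed.
Lemma step_k1 a b K : step (Retc b (pushc 1 a K)) = Retc (cpair a b) K.
Proof. stp. reflexivity. Qed.
Lemma step_k2 v f K : step (Retc v (pushc 2 f K)) = Evalc f v K.
Proof. stp. reflexivity. Qed.
Lemma step_k3 v g a y K :
  step (Retc v (pushc 3 (cpair g (cpair a y)) K)) = Evalc g (cpair a (cpair y v)) K.
Proof. stp. reflexivity. Qed.
Lemma step_k4z f x z K : step (Retc 0 (pushc 4 (cpair f (cpair x z)) K)) = Retc z K.
Proof. stp. reflexivity. Qed.
Lemma step_k4s v f x z K :
  step (Retc (S v) (pushc 4 (cpair f (cpair x z)) K)) =
  Evalc f (cpair x (S z)) (pushc 4 (cpair f (cpair x (S z))) K).
Proof. stp. reflexivity. Qed.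
Lemma step_halt v : step (Retc v 0) = Retc v 0.
Proof. stp. reflexivity. Qed.

Definition reach (a b : nat) := exists s, Nat.iter s step a = b.
Lemma reach_refl a : reach a a.
Proof. exists 0; reflexivity. Qed.
Lemma reach_trans a b c : reach a b -> reach b c -> reach a c.
Proof. intros [s1 H1] [s2 H2]. exists (s2 + s1). rewrite Nat.iter_add, H1, H2. reflexivity. Qed.
Lemma reach_step a b : step a = b -> reach a b.
Proof. intro H; exists 1; simpl; exact H. Qed.

Fixpoint sim c x y (H : eval c x y) {struct H} : forall K, reach (Evalc (code c) x K) (Retc y K).
Proof.
  destruct H; intro K.
  - apply reach_step, step_zero.
  - apply reach_step, step_succ.
  - apply reach_step, step_id.
  - pose proof (step_fst (cpair a b) K) as E. rewrite fstn_cpair in E. apply reach_step, E.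
  - pose proof (step_snd (cpair a b) K) as E. rewrite sndn_cpair' in E. apply reach_step, E.
  - eapply reach_trans; [apply reach_step, step_pair|].
    eapply reach_trans; [apply (sim _ _ _ H)|].
    eapply reach_trans; [apply reach_step, step_k0|].
    eapply reach_trans; [apply (sim _ _ _ H0)|].
    apply reach_step, step_k1.
  - eapply reach_trans; [apply reach_step, step_comp|].
    eapply reach_trans; [apply (sim _ _ _ H)|].
    eapply reach_trans; [apply reach_step, step_k2|].
    apply (sim _ _ _ H0).
  - eapply reach_trans; [apply reach_step, step_rec0|]. apply (sim _ _ _ H).
  - eapply reach_trans; [apply reach_step, step_recS|].
    eapply reach_trans; [apply (sim _ _ _ H)|].
    eapply reach_trans; [apply reach_step, step_k3|].
    apply (sim _ _ _ H0).
  - eapply reach_trans; [apply reach_step, step_min|].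
    assert (Hz : forall z, z <= y -> reach (Evalc (code f) (cpair x 0) (pushc 4 (cpair (code f) (cpair x 0)) K))
                                       (Evalc (code f) (cpair x z) (pushc 4 (cpair (code f) (cpair x z)) K))).
    { induction z as [|z IHz]; intro Hle; [apply reach_refl|].
      eapply reach_trans; [apply IHz; lia|].
      destruct (H0 z ltac:(lia)) as [v Hv].
      eapply reach_trans; [apply (sim _ _ _ Hv)|].
      apply reach_step, step_k4s. }
    eapply reach_trans; [apply (Hz y (le_n y))|].
    eapply reach_trans; [apply (sim _ _ _ H)|].
    apply reach_step, step_k4z.
Qed.

Definition runE := EIter stepE (ESn EVar) (mkEval (EFs (EFs EVar)) (ESn (EFs EVar)) EZ).
Definition haltE := EIfz (EFs EVar) (EConst 1)
   (EIfz (EPred (EFs EVar)) (EIfz (ESn (ESn EVar)) EZ (EConst 1)) (EConst 1)).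
Definition testE := ECmp haltE runE.
Definition outE := ECmp (EFs (ESn EVar)) runE.
Definition Uprf := PComp (compile outE) (PPair PId (PMin (compile testE))).

Lemma denote_runE e x s : denote runE (cpair (cpair e x) s) = Nat.iter s step (Evalc e x 0).
Proof. unfold runE, mkEval. cbn [denote]. rewrite !fstn_cpair, !sndn_cpair'. reflexivity. Qed.

Lemma halt_cases C : denote haltE C = 0 \/ denote haltE C = 1.
Proof.
  unfold haltE. cbn [denote]. rewrite !denote_EConst.
  destruct (fstn C) as [|[|]]; simpl; auto. destruct (sndn (sndn C)); auto.
Qed.
Lemma halt_zero C : denote haltE C = 0 -> C = Retc (fstn (sndn C)) 0.
Proof.
  unfold haltE. cbn [denote]. rewrite !denote_EConst. intro H.
  destruct (fstn C) as [|[|k]] eqn:E1; simpl in H; try discriminate.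
  destruct (sndn (sndn C)) eqn:E2; try discriminate.
  unfold Retc. rewrite <- E1. rewrite <- E2. rewrite !cpair_unpair. reflexivity.
Qed.
Lemma halt_Ret v : denote haltE (Retc v 0) = 0.
Proof. unfold haltE, Retc. cbn [denote]. rewrite !fstn_cpair, !sndn_cpair'. reflexivity. Qed.

Lemma iter_halt k v : Nat.iter k step (Retc v 0) = Retc v 0.
Proof. induction k; [reflexivity|]. rewrite Nat.iter_succ, IHk. apply step_halt. Qed.

Lemma bounded_dec (P : nat -> Prop) (dec : forall n, P n \/ ~ P n) n :
  (exists z, z < n /\ P z) \/ (forall z, z < n -> ~ P z).
Proof.
  induction n as [|n IH]; [right; intros; lia|].
  destruct IH as [[z [Hz Pz]]|H]; [left; exists z; split; [lia|auto]|].
  destruct (dec n) as [Pn|Pn]; [left; exists n; split; [lia|auto]|].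
  right; intros z Hz. destruct (Nat.eq_dec z n); [subst; auto| apply H; lia].
Qed.

Lemma least_nat (P : nat -> Prop) (dec : forall n, P n \/ ~ P n) n :
  P n -> exists m, P m /\ forall z, z < m -> ~ P z.
Proof.
  induction n as [n IH] using (well_founded_induction lt_wf). intro Hn.
  destruct (bounded_dec P dec n) as [[z [Hz Pz]]|H].
  - exact (IH z Hz Pz).
  - exists n; auto.
Qed.

Theorem U_ok c x y : eval c x y -> eval Uprf (cpair (code c) x) y.
Proof.
  intro H. set (inp := cpair (code c) x).
  destruct (sim c x y H 0) as [s0 Hs0].
  set (P := fun s => denote testE (cpair inp s) = 0).
  assert (Ps0 : P s0).
  { unfold P, testE. cbn [denote]. unfold inp. rewrite denote_runE, Hs0. apply halt_Ret. }
  destruct (least_nat P (fun n => ltac:(unfold P; destruct (denote testE (cpair inp n)); auto)) s0 Ps0)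
    as [s [Ps Hlt]].
  unfold Uprf. econstructor.
  - constructor; [constructor|]. constructor.
    + pose proof (compile_ok testE (cpair inp s)) as E. unfold P in Ps. rewrite Ps in E. exact E.
    + intros z Hz. specialize (Hlt z Hz). unfold P in Hlt.
      exists 0. pose proof (compile_ok testE (cpair inp z)) as E.
      unfold testE in *. cbn [denote] in *.
      destruct (halt_cases (denote runE (cpair inp z))) as [E0|E0]; [contradiction|].
      rewrite E0 in E. exact E.
  - pose proof (compile_ok outE (cpair inp s)) as E.
    replace (denote outE (cpair inp s)) with y in E; [exact E|].
    assert (Hle : s <= s0).
    { destruct (Nat.le_gt_cases s s0) as [|Hg]; auto. exfalso. apply (Hlt s0 Hg Ps0). }
    unfold P, testE in Ps. cbn [denote] in Ps. apply halt_zero in Ps.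
    unfold outE. cbn [denote].
    unfold inp in *. rewrite denote_runE in *.
    set (C := Nat.iter s step (Evalc (code c) x 0)) in *.
    replace s0 with ((s0 - s) + s) in Hs0 by lia.
    rewrite Nat.iter_add in Hs0. fold C in Hs0. rewrite Ps, iter_halt in Hs0. unfold Retc in Hs0.
    apply cpair_inj in Hs0. destruct Hs0 as [_ Hs0]. apply cpair_inj in Hs0. symmetry; apply Hs0.
Qed.

Definition trk (A B : asm) (f : car A -> car B) : Prop :=
  exists c, forall x, eval c (tr A x) (tr B (f x)).

Lemma trk_tracked A B f : trk A B f -> tracked A B f.
Proof. intros [c Hc]. exists (code c). intro x. exists c. auto. Qed.

Lemma tracked_trk A B f : tracked A B f -> trk A B f.
Proof.
  intros [t Ht]. exists (PComp Uprf (PPair (compile (EConst t)) PId)).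
  intro x. destruct (Ht x) as [c [Hc Hev]].
  econstructor; [constructor; [|constructor]|].
  - pose proof (compile_ok (EConst t) (tr A x)) as E. rewrite denote_EConst in E. exact E.
  - subst t. apply U_ok. exact Hev.
Qed.

Lemma leq_trk A (X Y : over A) :
  leq X Y <-> exists h, trk (dom X) (dom Y) h /\ forall x, omap Y (h x) = omap X x.
Proof.
  split; intros [h [H1 H2]]; exists h; split; auto.
  - apply tracked_trk; auto.
  - apply trk_tracked; auto.
Qed.

Lemma leq_refl A (X : over A) : leq X X.
Proof. exists (fun x => x). split; [apply id_tracked| reflexivity]. Qed.
Arguments leq_refl {A} X.

Lemma leq_trans A (X Y Z : over A) : leq X Y -> leq Y Z -> leq X Z.
Proof.
  rewrite !leq_trk. intros [h1 [[c1 T1] E1]] [h2 [[c2 T2] E2]].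
  exists (fun x => h2 (h1 x)). split.
  - exists (PComp c2 c1). intro x. econstructor; [apply T1|apply T2].
  - intro x. rewrite E2, E1. reflexivity.
Qed.

Lemma omap_trk A (X : over A) : trk (dom X) A (omap X).
Proof. apply tracked_trk, omap_tr. Qed.

Lemma ev_comp c1 c2 a b d : eval c1 a b -> eval c2 b d -> eval (PComp c2 c1) a d.
Proof. intros; econstructor; eauto. Qed.

Lemma ev_ex e n v : denote e n = v -> eval (compile e) n v.
Proof. intros <-. apply compile_ok. Qed.

Definition Rdom n (f : form n) : asm :=
  @Asm {p : car (ctxobj n) * nat | realizes f (fst p) (snd p)}
       (fun p => cpair (tr (ctxobj n) (fst (proj1_sig p))) (snd (proj1_sig p))).

Lemma Rfst_tracked n f : tracked (Rdom n f) (ctxobj n) (fun p => fst (proj1_sig p)).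
Proof. apply trk_tracked. exists PFst. intro x. simpl. constructor. Qed.

Definition Rover n (f : form n) : over (ctxobj n) :=
  @Over (ctxobj n) (Rdom n f) (fun p => fst (proj1_sig p)) (Rfst_tracked n f).
Arguments Rover {n} f.

Lemma intoR n f (Z : over (ctxobj n)) (m : car (dom Z) -> nat)
  (Hm : forall z, realizes f (omap Z z) (m z)) (c : prf)
  (Hc : forall z, eval c (tr _ z) (cpair (tr _ (omap Z z)) (m z))) : leq Z (Rover f).
Proof.
  apply leq_trk. exists (fun z => exist _ (omap Z z, m z) (Hm z) : car (Rdom n f)).
  split; [|reflexivity]. exists c. intro z. apply Hc.
Qed.

Lemma intoR_inv n f (Z : over (ctxobj n)) : leq Z (Rover f) ->
  exists (m : car (dom Z) -> nat) c,
    (forall z, realizes f (omap Z z) (m z)) /\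
    (forall z, eval c (tr _ z) (cpair (tr _ (omap Z z)) (m z))).
Proof.
  rewrite leq_trk. intros [h [[c Hc] E]].
  exists (fun z => snd (proj1_sig (h z))), c. split.
  - intro z. rewrite <- (E z). simpl. exact (proj2_sig (h z)).
  - intro z. rewrite <- (E z). exact (Hc z).
Qed.

Lemma equiv_leq_l A (X Y Z : over A) : equiv X Y -> leq X Z -> leq Y Z.
Proof. intros [_ H] H'. eapply leq_trans; eauto. Qed.
Lemma equiv_leq_r A (X Y Z : over A) : equiv X Y -> leq Z X -> leq Z Y.
Proof. intros [H _] H'. eapply leq_trans; eauto. Qed.
Arguments equiv_leq_l {A X Y Z}.
Arguments equiv_leq_r {A X Y Z}.

Lemma denote_EIter_ f k x n : denote (EIter f k x) n = Nat.iter (denote k n) (denote f) (denote x n).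
Proof. reflexivity. Qed.
Lemma denote_EFs_ a n : denote (EFs a) n = fstn (denote a n).
Proof. reflexivity. Qed.
Definition EMul a b := EFs (EIter (EPr (EAdd (EFs EVar) (ESn EVar)) (ESn EVar)) b (EPr EZ a)).
Lemma denote_EMul a b n : denote (EMul a b) n = denote b n * denote a n.
Proof.
  unfold EMul. rewrite denote_EFs_, denote_EIter_. change (denote (EPr EZ a) n) with (cpair 0 (denote a n)).
  generalize (denote b n) as k. intro k.
  assert (H : Nat.iter k (denote (EPr (EAdd (EFs EVar) (ESn EVar)) (ESn EVar))) (cpair 0 (denote a n))
              = cpair (k * denote a n) (denote a n)).
  { induction k as [|k IH]; [reflexivity|]. rewrite Nat.iter_succ, IH.
    cbn [denote]. rewrite denote_EAdd. cbn [denote]. rewrite fstn_cpair, sndn_cpair'. f_equal. simpl. lia. }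
  rewrite H, fstn_cpair. reflexivity.
Qed.

Fixpoint varE (i : nat) : ex := match i with 0 => ESn EVar | S i => ECmp (varE i) (EFs EVar) end.
Lemma varE_ok n : forall (g : car (ctxobj n)) i, i < n -> denote (varE i) (tr _ g) = lookup n g i.
Proof.
  induction n as [|n IH]; intros g i Hi; [lia|].
  destruct g as [g k]. destruct i as [|i]; simpl.
  - apply sndn_cpair'.
  - rewrite fstn_cpair. apply IH. lia.
Qed.

Lemma term_prog n (s : term n) : exists e, forall g, denote e (tr (ctxobj n) g) = teval s g.
Proof.
  induction s as [i Hi| |s IH|s1 IH1 s2 IH2|s1 IH1 s2 IH2].
  - exists (varE i). intro g. simpl. apply varE_ok; auto.
  - exists EZ. reflexivity.
  - destruct IH as [e He]. exists (ES e). intro g. simpl. rewrite He. reflexivity.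
  - destruct IH1 as [e1 H1], IH2 as [e2 H2]. exists (EAdd e1 e2). intro g.
    rewrite denote_EAdd, H1, H2. reflexivity.
  - destruct IH1 as [e1 H1], IH2 as [e2 H2]. exists (EMul e2 e1). intro g.
    rewrite denote_EMul, H1, H2. reflexivity.
Qed.

Arguments term_prog {n}.
Definition KcodeE := EIter (ECp (EConst 6) (ECp (EConst (code PSucc)) EVar)) EVar EZ.
Lemma KcodeE_ok k : denote KcodeE k = code (compile (EConst k)).
Proof.
  unfold KcodeE. rewrite denote_EIter_. change (denote EVar k) with k. change (denote EZ k) with 0.
  induction k as [|k IH]; [reflexivity|].
  rewrite Nat.iter_succ, IH. rewrite !denote_ECp, !denote_EConst. reflexivity.
Qed.
Definition smnE (X : prf) :=
  ECp (EConst 6) (ECp (EConst (code X)) (ECp (EConst 5) (ECp KcodeE (EConst (code PId))))).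
Definition smnP (X : prf) (k : nat) := PComp X (PPair (compile (EConst k)) PId).
Lemma smnE_ok X k : denote (smnE X) k = code (smnP X k).
Proof. unfold smnE. rewrite !denote_ECp, !denote_EConst, KcodeE_ok. reflexivity. Qed.
Lemma smnP_ok X k a b : eval X (cpair k a) b -> phi (code (smnP X k)) a b.
Proof.
  intro H. exists (smnP X k). split; [reflexivity|]. unfold smnP.
  econstructor; [|exact H]. constructor; [|constructor].
  apply ev_ex. apply denote_EConst.
Qed.

Lemma eq_helper n (s t : term n) g : teval s g = teval t g ->
  (teval s g, teval t g) = omap delta_N (teval s g).
Proof. intro H. simpl. rewrite H. reflexivity. Qed.
Arguments eq_helper {n}.

Lemma case_eq I (HI : std_interp I) n (s t : term n) : equiv (I n (FEq s t)) (Rover (FEq s t)).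
Proof.
  pose proof (si_eq HI s t) as HE. split.
  - eapply leq_trans; [apply HE|].
    apply intoR with (m := fun z => snd (proj1_sig z)) (c := PId).
    + intros [[g k] pf]. simpl in *. inversion pf; congruence.
    + intros [[g k] pf]. simpl. constructor.
  - eapply leq_trans; [|apply HE]. apply leq_trk. destruct (term_prog s) as [e He].
    exists (fun x : car (Rdom n (FEq s t)) =>
       match x with exist _ (g, m) pf =>
         exist _ (g, teval s g) (eq_helper s t g pf) end).
    split.
    + exists (PPair PFst (PComp (compile e) PFst)).
      intros [[g m] pf]. simpl. constructor; [constructor|].
      econstructor; [constructor|]. apply ev_ex. apply He.
    + intros [[g m] pf]. reflexivity.
Qed.

Lemma case_bot I (HI : std_interp I) n : equiv (I n (FBot n)) (Rover (FBot n)).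
Proof.
  split; [apply (si_bot HI)|]. apply leq_trk.
  exists (fun x : car (Rdom n (FBot n)) => False_rect _ (proj2_sig x)). split.
  - exists PZero. intros [p H]. destruct H.
  - intros [p H]. destruct H.
Qed.

Lemma case_and I (HI : std_interp I) n (p q : form n) :
  equiv (I n p) (Rover p) -> equiv (I n q) (Rover q) -> equiv (I n (FAnd p q)) (Rover (FAnd p q)).
Proof.
  intros IHp IHq. split.
  - destruct (proj1 (si_and HI p q (I n (FAnd p q))) (leq_refl _)) as [H1 H2].
    apply (equiv_leq_r IHp) in H1. apply (equiv_leq_r IHq) in H2.
    apply intoR_inv in H1. apply intoR_inv in H2.
    destruct H1 as [m1 [c1 [R1 T1]]], H2 as [m2 [c2 [R2 T2]]].
    apply intoR with (m := fun z => cpair (m1 z) (m2 z))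
                     (c := PPair (PComp PFst c1) (PPair (PComp PSnd c1) (PComp PSnd c2))).
    + intro z. simpl. exists (m1 z), (m2 z). auto.
    + intro z. constructor; [econstructor; [apply T1|constructor]|].
      constructor; (econstructor; [apply T1 || apply T2|constructor]).
  - apply (si_and HI). split.
    + eapply leq_trans; [|apply IHp].
      apply intoR with (m := fun z => fstn (snd (proj1_sig z)))
                       (c := compile (EPr (EFs EVar) (EFs (ESn EVar)))).
      * intros [[g m] H]. simpl in H |- *. destruct H as [a [b [Hm [Ha Hb]]]]. subst m. rewrite fstn_cpair. exact Ha.
      * intros [[g m] H]. apply ev_ex. simpl. rewrite fstn_cpair, sndn_cpair'. reflexivity.
    + eapply leq_trans; [|apply IHq].
      apply intoR with (m := fun z => sndn (snd (proj1_sig z)))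
                       (c := compile (EPr (EFs EVar) (ESn (ESn EVar)))).
      * intros [[g m] H]. simpl in H |- *. destruct H as [a [b [Hm [Ha Hb]]]]. subst m. rewrite sndn_cpair'. exact Hb.
      * intros [[g m] H]. apply ev_ex. simpl. rewrite fstn_cpair, sndn_cpair'. reflexivity.
Qed.

Lemma orL n (p q : form n) g m : realizes (FOr p q) g m -> fstn m = 0 -> realizes p g (sndn m).
Proof.
  simpl. intros [[a [Hm Ha]]|[k [a [Hm Ha]]]] E; subst m.
  - rewrite sndn_cpair'. exact Ha.
  - rewrite fstn_cpair in E. discriminate.
Qed.
Lemma orR n (p q : form n) g m : realizes (FOr p q) g m -> fstn m <> 0 -> realizes q g (sndn m).
Proof.
  simpl. intros [[a [Hm Ha]]|[k [a [Hm Ha]]]] E; subst m.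
  - rewrite fstn_cpair in E. contradiction.
  - rewrite sndn_cpair'. exact Ha.
Qed.

Lemma case_or I (HI : std_interp I) n (p q : form n) :
  equiv (I n p) (Rover p) -> equiv (I n q) (Rover q) -> equiv (I n (FOr p q)) (Rover (FOr p q)).
Proof.
  intros IHp IHq. split.
  - apply (si_or HI). split.
    + eapply leq_trans; [apply IHp|].
      apply intoR with (m := fun z => cpair 0 (snd (proj1_sig z)))
                       (c := compile (EPr (EFs EVar) (EPr EZ (ESn EVar)))).
      * intros [[g m] H]. simpl. left. exists m. auto.
      * intros [[g m] H]. apply ev_ex. simpl. rewrite fstn_cpair, sndn_cpair'. reflexivity.
    + eapply leq_trans; [apply IHq|].
      apply intoR with (m := fun z => cpair 1 (snd (proj1_sig z)))
                       (c := compile (EPr (EFs EVar) (EPr (EConst 1) (ESn EVar)))).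
      * intros [[g m] H]. simpl. right. exists 0, m. auto.
      * intros [[g m] H]. apply ev_ex. simpl. rewrite fstn_cpair, sndn_cpair'. reflexivity.
  - destruct (proj1 (si_or HI p q (I n (FOr p q))) (leq_refl _)) as [H1 H2].
    apply (equiv_leq_l IHp) in H1. apply (equiv_leq_l IHq) in H2.
    rewrite leq_trk in H1, H2.
    destruct H1 as [h1 [[c1 T1] E1]], H2 as [h2 [[c2 T2] E2]].
    apply leq_trk.
    exists (fun x : car (Rdom n (FOr p q)) => match x with exist _ (g, m) pf =>
       match Nat.eq_dec (fstn m) 0 with
       | left e => h1 (exist _ (g, sndn m) (orL _ p q g m pf e))
       | right ne => h2 (exist _ (g, sndn m) (orR _ p q g m pf ne))
       end end).
    split.
    + exists (PComp Uprf (compile (EPr (EIfz (EFs (ESn EVar)) (EConst (code c1)) (EConst (code c2)))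
                                       (EPr (EFs EVar) (ESn (ESn EVar)))))).
      intros [[g m] pf]. simpl (tr _ _).
      destruct (Nat.eq_dec (fstn m) 0) as [e|ne].
      * econstructor; [apply ev_ex|apply U_ok; exact (T1 _)].
        transitivity (cpair (code c1) (cpair (tr _ g) (sndn m))); [|reflexivity].
        cbn [denote]. rewrite !fstn_cpair, !sndn_cpair', e, denote_EConst. reflexivity.
      * econstructor; [apply ev_ex|apply U_ok; exact (T2 _)].
        transitivity (cpair (code c2) (cpair (tr _ g) (sndn m))); [|reflexivity].
        cbn [denote]. rewrite !fstn_cpair, !sndn_cpair'.
        destruct (fstn m); [contradiction|rewrite denote_EConst; reflexivity].
    + intros [[g m] pf]. destruct (Nat.eq_dec (fstn m) 0); [rewrite E1|rewrite E2]; reflexivity.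
Qed.

Definition meetDom n (Z : over (ctxobj n)) (p : form n) : asm :=
  @Asm {w : car (dom Z) * nat | realizes p (omap Z (fst w)) (snd w)}
       (fun w => cpair (tr _ (fst (proj1_sig w))) (snd (proj1_sig w))).
Arguments meetDom {n}.
Lemma meet_tracked n (Z : over (ctxobj n)) (p : form n) :
  tracked (meetDom Z p) (ctxobj n) (fun w => omap Z (fst (proj1_sig w))).
Proof.
  destruct (omap_trk _ Z) as [c0 T0]. apply trk_tracked. exists (PComp c0 PFst).
  intro w. econstructor; [constructor|apply T0].
Qed.
Definition meetR n (Z : over (ctxobj n)) (p : form n) : over (ctxobj n) :=
  @Over _ (meetDom Z p) _ (meet_tracked n Z p).
Arguments meetR {n}.

Lemma meetR_Z n (Z : over (ctxobj n)) p : leq (meetR Z p) Z.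
Proof.
  apply leq_trk. exists (fun w => fst (proj1_sig w)). split; [|reflexivity].
  exists PFst. intro w. constructor.
Qed.
Lemma meetR_p n (Z : over (ctxobj n)) p : leq (meetR Z p) (Rover p).
Proof.
  destruct (omap_trk _ Z) as [c0 T0].
  apply intoR with (m := fun w => snd (proj1_sig w)) (c := PPair (PComp c0 PFst) PSnd).
  - intro w. exact (proj2_sig w).
  - intro w. constructor; [econstructor; [constructor|apply T0]|constructor].
Qed.

Lemma case_imp I (HI : std_interp I) n (p q : form n) :
  equiv (I n p) (Rover p) -> equiv (I n q) (Rover q) -> equiv (I n (FImp p q)) (Rover (FImp p q)).
Proof.
  intros IHp IHq. split.
  - pose proof (proj1 (si_imp HI p q (I n (FImp p q))) (leq_refl _)) as HW.
    set (Z := I n (FImp p q)) in *.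
    destruct (omap_trk _ Z) as [c0 T0].
    assert (H1 := meetR_Z _ Z p).
    assert (H2 : leq (meetR Z p) (I n p)) by (eapply leq_trans; [apply meetR_p|apply IHp]).
    specialize (HW _ H1 H2). apply (equiv_leq_r IHq) in HW. apply intoR_inv in HW.
    destruct HW as [mq [cq [Rq Tq]]].
    apply intoR with (m := fun z => code (smnP (PComp PSnd cq) (tr _ z)))
                     (c := PPair c0 (compile (smnE (PComp PSnd cq)))).
    + intros z a Ha.
      set (w := exist _ (z, a) Ha : car (dom (meetR Z p))).
      exists (mq w). split; [|exact (Rq w)].
      apply smnP_ok. econstructor; [exact (Tq w)|constructor].
    + intro z. constructor; [apply T0|]. apply ev_ex. apply smnE_ok.
  - apply (si_imp HI). intros W HWR HWp.
    apply (equiv_leq_r IHp) in HWp. apply intoR_inv in HWR. apply intoR_inv in HWp.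
    destruct HWR as [m1 [c1 [R1 T1]]], HWp as [m2 [c2 [R2 T2]]].
    eapply leq_trans; [|apply IHq].
    set (bs := fun w => constructive_indefinite_description _ (R1 w (m2 w) (R2 w))).
    apply intoR with (m := fun w => proj1_sig (bs w))
        (c := PPair (PComp PFst c1) (PComp Uprf (PPair (PComp PSnd c1) (PComp PSnd c2)))).
    + intro w. exact (proj2 (proj2_sig (bs w))).
    + intro w. constructor; [econstructor; [apply T1|constructor]|].
      destruct (proj1 (proj2_sig (bs w))) as [c [Hc Hev]].
      econstructor; [constructor; (econstructor; [apply T1 || apply T2|constructor])|].
      assert (E : eval Uprf (cpair (code c) (m2 w)) (proj1_sig (bs w))) by (apply U_ok; exact Hev).
      rewrite Hc in E. exact E.
Qed.

Lemma all_at n (p : form (S n)) (gk : car (ctxobj (S n))) (r : car (Rdom n (FAll p)))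
  (e : ctx_proj gk = fst (proj1_sig r)) :
  exists b, phi (snd (proj1_sig r)) (snd gk) b /\ realizes p gk b.
Proof.
  destruct r as [[g m] H]. simpl in *. destruct gk as [g' k]. unfold ctx_proj in e. simpl in e.
  subst g'. apply H.
Qed.

Lemma case_all I (HI : std_interp I) n (p : form (S n)) :
  equiv (I (S n) p) (Rover p) -> equiv (I n (FAll p)) (Rover (FAll p)).
Proof.
  intro IHp. split.
  - pose proof (proj1 (si_all HI p (I n (FAll p))) (leq_refl _)) as H.
    apply (equiv_leq_r IHp) in H. apply intoR_inv in H. destruct H as [mp [cp [Rp_ Tp]]].
    set (Z := I n (FAll p)) in *.
    destruct (omap_trk _ Z) as [c0 T0].
    set (X := PComp PSnd (PComp cp (PPair (PPair (PComp c0 PFst) PSnd) PFst))).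
    apply intoR with (m := fun z => code (smnP X (tr _ z))) (c := PPair c0 (compile (smnE X))).
    + intros z k.
      set (y := exist _ ((omap Z z, k), z) eq_refl
                 : car (dom (reindex (ctxobj (S n)) (@ctx_proj n) Z))).
      exists (mp y). split; [|exact (Rp_ y)].
      apply smnP_ok. unfold X.
      eapply ev_comp; [eapply ev_comp; [|exact (Tp y)]|constructor].
      constructor; [constructor; [eapply ev_comp; [constructor|apply T0]|constructor]|constructor].
    + intro z. constructor; [apply T0|]. apply ev_ex. apply smnE_ok.
  - apply (si_all HI). eapply leq_trans; [|apply IHp].
    set (bs := fun y : car (dom (reindex (ctxobj (S n)) (@ctx_proj n) (Rover (FAll p)))) =>
                 constructive_indefinite_description _
                   (all_at n p (fst (proj1_sig y)) (snd (proj1_sig y)) (proj2_sig y))).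
    apply intoR with (m := fun y => proj1_sig (bs y))
        (c := PPair PFst (PComp Uprf (compile (EPr (ESn (ESn EVar)) (ESn (EFs EVar)))))).
    + intro y. exact (proj2 (proj2_sig (bs y))).
    + intro y. constructor; [constructor|].
      destruct (proj1 (proj2_sig (bs y))) as [c [Hc Hev]].
      assert (E : eval Uprf (cpair (code c) (snd (fst (proj1_sig y)))) (proj1_sig (bs y)))
        by (apply U_ok; exact Hev).
      rewrite Hc in E. econstructor; [apply ev_ex|exact E].
      destruct y as [[[g k] r] e]. simpl. rewrite !fstn_cpair, !sndn_cpair'. reflexivity.
Qed.

Lemma ex_intro_r n (p : form (S n)) (gk : car (ctxobj (S n))) a :
  realizes p gk a -> realizes (FEx p) (fst gk) (cpair (snd gk) a).
Proof. destruct gk as [g k]. simpl. intro H. exists k, a. auto. Qed.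

Lemma ex_elim n (p : form (S n)) g m :
  realizes (FEx p) g m -> realizes p ((g, fstn m) : car (ctxobj (S n))) (sndn m).
Proof. simpl. intros [k [a [Hm H]]]. subst m. rewrite fstn_cpair, sndn_cpair'. exact H. Qed.

Lemma case_ex I (HI : std_interp I) n (p : form (S n)) :
  equiv (I (S n) p) (Rover p) -> equiv (I n (FEx p)) (Rover (FEx p)).
Proof.
  intro IHp. split.
  - apply (si_ex HI). eapply leq_trans; [apply IHp|].
    apply leq_trk.
    exists (fun x : car (Rdom (S n) p) => match x with exist _ (gk, a) H =>
      exist _ (gk, exist _ (fst gk, cpair (snd gk) a) (ex_intro_r n p gk a H) : car (Rdom n (FEx p)))
            eq_refl
      : car (dom (reindex (ctxobj (S n)) (@ctx_proj n) (Rover (FEx p)))) end).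
    split.
    + exists (compile (EPr (EFs EVar) (EPr (EFs (EFs EVar)) (EPr (ESn (EFs EVar)) (ESn EVar))))).
      intros [[[g k] a] H]. apply ev_ex. simpl. rewrite !fstn_cpair, !sndn_cpair'. reflexivity.
    + intros [[gk a] H]. reflexivity.
  - pose proof (proj1 (si_ex HI p (I n (FEx p))) (leq_refl _)) as H.
    apply (equiv_leq_l IHp) in H. rewrite leq_trk in H. destruct H as [h [[c T] E]].
    apply leq_trk.
    exists (fun x : car (Rdom n (FEx p)) => match x with exist _ (g, m) H =>
      snd (proj1_sig (h (exist _ ((g, fstn m), sndn m) (ex_elim n p g m H) : car (Rdom (S n) p)))) end).
    split.
    + exists (PComp PSnd (PComp c (compile (EPr (EPr (EFs EVar) (EFs (ESn EVar))) (ESn (ESn EVar)))))).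
      intros [[g m] H].
      eapply ev_comp; [eapply ev_comp; [apply ev_ex|exact (T (exist _ ((g, fstn m), sndn m) (ex_elim n p g m H)))]|].
      * simpl. rewrite !fstn_cpair, !sndn_cpair'. reflexivity.
      * match goal with |- eval PSnd (tr _ ?y) _ => destruct y as [[gk z] e] end. simpl. constructor.
    + intros [[g m] H].
      match goal with |- context [h ?x] => pose proof (E x) as E'; destruct (h x) as [[gk z] e] end.
      simpl in *. rewrite <- e, E'. reflexivity.
Qed.

Theorem main I (HI : std_interp I) n (f : form n) : equiv (I n f) (Rover f).
Proof.
  induction f.
  - apply case_eq; auto.
  - apply case_bot; auto.
  - apply case_and; auto.
  - apply case_or; auto.
  - apply case_imp; auto.
  - apply case_all; auto.
  - apply case_ex; auto.
Qed.

Theorem corollary5p2 :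
  forall (I : forall n, form n -> over (ctxobj n)),
    std_interp I ->
    forall phi0 : form 0,
      leq (top_over (ctxobj 0)) (I 0 phi0) <->
      exists m : nat, realizes phi0 (tt : car (ctxobj 0)) m.
Proof.
  intros I HI phi0. pose proof (main I HI 0 phi0) as Eq. split.
  - intro H. apply (equiv_leq_r Eq) in H. apply intoR_inv in H.
    destruct H as [m [c [R _]]]. exists (m tt). exact (R tt).
  - intros [m Hm]. apply (equiv_leq_r (Y := I 0 phi0) (conj (proj2 Eq) (proj1 Eq))).
    apply intoR with (m := fun _ => m) (c := compile (EPr EZ (EConst m))).
    + intros []. exact Hm.
    + intros []. apply ev_ex. simpl. rewrite denote_EConst. reflexivity.
Qed.
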